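(* Fix a nonempty partition $\lambda$. For $n>|\lambda|+\lambda_1$ let $N(n)$ be the number of standard Young tableaux of shape $\lambda[n]$, and let $G(n)$ be the number of those standard Young tableaux $T[n]$ of shape $\lambda[n]$ (where $T$ is the part below the top row, of shape $\lambda$) such that any two entries of $T$ differ by at least $2$ and $2$ and $n$ are not both entries of $T$. Then $\lim_{n\to\infty} G(n)/N(n)=1$.
   Context: For a partition $\lambda=(\lambda_1\ge\dots\ge\lambda_\ell)$ with $|\lambda|=\lambda_1+\dots+\lambda_\ell$, $\lambda[n]$ is the partition of $n$ obtained by adding a new largest part of size $n-|\lambda|$ (i.e. $(n-|\lambda|,\lambda_1,\dots,\lambda_\ell)$). For a tableau $T$ with distinct positive entries, $T[n]$ denotes the tableau obtained by placing above $T$ a top row consisting of all elements of $\{1,\dots,n\}$ not in $T$, in increasing order. A standard Young tableau with $n$ boxes has entries $1,\dots,n$ increasing along rows and down columns. *)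

(* Defs.v *)
From HB Require Import structures.
From mathcomp Require Import all_boot all_order all_algebra.
From mathcomp Require Import all_classical all_reals all_analysis.

Set Implicit Arguments.
Unset Strict Implicit.
Unset Printing Implicit Defensive.

Definition is_partition (lam : seq nat) : bool :=
  sorted geq lam && all (fun x => 0 < x) lam.

Definition pad_shape (lam : seq nat) (n : nat) : seq nat :=
  (n - sumn lam) :: lam.

(* A tableau is a list of rows (top row first). *)
Definition entries (t : seq (seq nat)) : seq nat := flatten t.

Definition is_syt (t : seq (seq nat)) : bool :=
  [&& perm_eq (entries t) (iota 1 (size (entries t))),
      all (sorted ltn) t,
      sorted geq (map size t) &
      all (fun i => all (fun j =>
             nth 0 (nth [::] t i) j < nth 0 (nth [::] t i.+1) j)
           (iota 0 (size (nth [::] t i.+1))))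
          (iota 0 (size t).-1)].

(* Tableaux of shape sh with entries 1..n are exactly the reshapings by sh
   of the orderings of 1..n (n = |sh|); this correspondence is a bijection,
   so counting orderings counts tableaux. *)
Definition num_syt_such (sh : seq nat) (P : seq (seq nat) -> bool) : nat :=
  count (fun p => is_syt (reshape sh p) && P (reshape sh p))
        (permutations (iota 1 (sumn sh))).

Definition N_syt (lam : seq nat) (n : nat) : nat :=
  num_syt_such (pad_shape lam n) (fun _ => true).

Definition good_tableau (n : nat) (t : seq (seq nat)) : bool :=
  let T := entries (behead t) in
  all (fun x => all (fun y => (x == y) || (x + 2 <= y) || (y + 2 <= x)) T) T
  && ~~ ((2 \in T) && (n \in T)).

Definition G_syt (lam : seq nat) (n : nat) : nat :=
  num_syt_such (pad_shape lam n) (good_tableau n).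

(* Main.v *)
Require Import Defs.
From HB Require Import structures.
From mathcomp Require Import all_boot all_order all_algebra.
From mathcomp Require Import all_classical all_reals all_analysis.
From mathcomp Require Import zify lra.
Set Implicit Arguments.
Unset Strict Implicit.
Unset Printing Implicit Defensive.

Lemma all_sorted_reshape (sh : seq nat) (s : seq nat) :
  sorted ltn s -> all (sorted ltn) (reshape sh s).
Proof.
elim: sh s => //= a sh IH s hs.
by rewrite take_sorted //= IH // drop_sorted.
Qed.

Lemma sorted_geq_nth (l : seq nat) i : sorted geq l -> i.+1 < size l ->
  nth 0 l i.+1 <= nth 0 l i.
Proof.
move=> hl hi.
have := @sorted_ltn_nth _ geq (fun y x z (h1 : geq x y) (h2 : geq y z) => leq_trans h2 h1) 0 l hl i i.+1.
rewrite !inE => h; apply: h => //; exact: ltnW.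
Qed.

Lemma is_syt_cat (lam c s : seq nat) :
  is_partition lam -> size s = sumn lam -> head 0 lam <= size c ->
  sorted ltn c -> sorted ltn s ->
  perm_eq (c ++ s) (iota 1 (size c + sumn lam)) ->
  (forall j, j < head 0 lam -> nth 0 c j < nth 0 s j) ->
  is_syt (c :: reshape lam s).
Proof.
move=> /andP[lsort lpos] hs hc sc ss hperm htop.
rewrite /is_syt /entries /= reshapeKr ?hs // size_cat hs hperm /=.
rewrite sc all_sorted_reshape //=.
have -> : map size (reshape lam s) = lam by rewrite -/(shape _) reshapeKl // hs.
apply/andP; split.
  by case: lam lsort hc {hs htop lpos hperm} => //= x l -> ->.
rewrite size_reshape.
apply/allP => i; rewrite mem_iota add0n => /andP[_ hi].
apply/allP => j; rewrite mem_iota add0n => /andP[_ hj].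
case: i hi hj => [|i] hi hj.
  rewrite /= nth_reshape /= take0 drop0 in hj *.
  case: lam lsort lpos hs htop hi hj hc {hperm} => //= x l _ _ hs htop _ hj hc.
  have hjx : j < x by move: hj; rewrite size_take; case: ifP => // /negbT; rewrite -leqNgt => h1 h; lia.
  by rewrite nth_take //; exact: htop.
rewrite /= !nth_reshape in hj *.
set S := sumn (take i lam).
have hS : sumn (take i.+1 lam) = S + nth 0 lam i.
  by rewrite (take_nth 0) ?sumn_rcons //; lia.
rewrite hS in hj *.
have hmon : nth 0 lam i.+1 <= nth 0 lam i by apply: sorted_geq_nth.
have hpos : 0 < nth 0 lam i by apply: (allP lpos); apply: mem_nth; apply: ltnW.
move: hj; rewrite size_take size_drop => hj.
have hj1 : j < nth 0 lam i.+1 by move: hj; case: ifP => // h1 h2; lia.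
have hj2 : S + nth 0 lam i + j < size s by move: hj; case: ifP => h1 h2; lia.
rewrite !nth_take ?nth_drop //; try lia.
apply: (@sorted_ltn_nth _ ltn ltn_trans 0 s ss); rewrite ?inE; lia.
Qed.


Section Lower.
Variables (l1 L k n : nat).
Hypothesis hLk : l1 + k * L <= n.

Definition sblock (f : {ffun 'I_k -> 'I_L}) : seq nat :=
  [seq l1.+1 + i * L + f i | i : 'I_k <- enum 'I_k].
Definition compl (s : seq nat) := [seq x <- iota 1 n | x \notin s].
Definition pblock f := compl (sblock f) ++ sblock f.

Lemma sb_sorted f : sorted ltn (sblock f).
Proof.
rewrite /sblock sorted_map.
have : sorted (relpre val ltn) (enum 'I_k) by rewrite -sorted_map val_enum_ord iota_ltn_sorted.
apply: sub_sorted => i j /= hij.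
have h1 : f i < L := ltn_ord _.
have h2 : i.+1 * L <= j * L by rewrite leq_mul2r hij orbT.
rewrite mulSn in h2; lia.
Qed.

Lemma sb_range f x : x \in sblock f -> l1 < x <= n.
Proof.
case/mapP => i _ ->.
have h1 : f i < L := ltn_ord _.
have h2 : i.+1 * L <= k * L by rewrite leq_mul2r ltn_ord orbT.
rewrite mulSn in h2; lia.
Qed.

Lemma sb_size f : size (sblock f) = k.
Proof. by rewrite size_map size_enum_ord. Qed.

Lemma sb_uniq f : uniq (sblock f).
Proof. exact: (sorted_uniq ltn_trans ltnn (sb_sorted f)). Qed.

Lemma pb_perm f : perm_eq (pblock f) (iota 1 n).
Proof.
rewrite /pblock /compl perm_catC.
rewrite perm_sym -(perm_filterC (mem (sblock f))) perm_sym perm_cat2r.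
apply: uniq_perm; rewrite ?sb_uniq ?filter_uniq ?iota_uniq //.
move=> x; rewrite mem_filter mem_iota /=.
case hx: (x \in sblock f) => //=.
have := sb_range hx; lia.
Qed.

Lemma compl_size f : size (compl (sblock f)) = n - k.
Proof.
have := perm_size (pb_perm f); rewrite size_cat sb_size size_iota; lia.
Qed.

Lemma compl_nth f j : j < l1 -> nth 0 (compl (sblock f)) j = j.+1.
Proof.
move=> hj.
have hn : n = l1 + (n - l1) by lia.
rewrite /compl hn iotaD filter_cat.
have -> : [seq x <- iota 1 l1 | x \notin sblock f] = iota 1 l1.
  apply/all_filterP/allP => x; rewrite mem_iota => hx.
  apply/negP => /sb_range; lia.
by rewrite nth_cat size_iota hj nth_iota.
Qed.

Lemma pb_drop f : drop (n - k) (pblock f) = sblock f.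
Proof. by rewrite /pblock drop_size_cat // compl_size. Qed.

Lemma pb_inj : injective pblock.
Proof.
move=> f g /(congr1 (drop (n - k))); rewrite !pb_drop => /eq_in_map h.
apply/ffunP => i; apply/val_inj; exact: (addnI (h i (mem_enum _ _))).
Qed.

End Lower.

Lemma N_lower lam n : is_partition lam -> lam != [::] ->
  sumn lam + head 0 lam <= n ->
  ((n - head 0 lam) %/ sumn lam) ^ sumn lam <= N_syt lam n.
Proof.
move=> hpart hne hn.
have hl1k : head 0 lam <= sumn lam by case: (lam) => //= x l; apply: leq_addr.
have hk : 0 < sumn lam.
  case/andP: hpart => _; case: (lam) hne => //= x l _ /andP[hx _]; lia.
set k := sumn lam in hn hl1k hk *; set l1 := head 0 lam in hn hl1k *.
set L := (n - l1) %/ k.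
have hLk : l1 + k * L <= n.
  have := leq_trunc_div (n - l1) k; rewrite -/L mulnC; lia.
rewrite /N_syt /num_syt_such.
have -> : sumn (pad_shape lam n) = n by rewrite /pad_shape /= -/k; lia.
have -> : L ^ k = #|{ffun 'I_k -> 'I_L}| by rewrite card_ffun !card_ord.
rewrite -size_filter cardE.
rewrite -(size_map (@pblock l1 L k n)).
apply: uniq_leq_size; first by rewrite map_inj_uniq ?enum_uniq //; exact: pb_inj.
move=> p /mapP[f _ ->].
rewrite mem_filter mem_permutations pb_perm // andbT.
rewrite /pad_shape -/k /= pb_drop //.
have -> : take (n - k) (@pblock l1 L k n f) = compl n (@sblock l1 L k f).
  by rewrite /pblock take_size_cat // compl_size.
rewrite andbT; apply: is_syt_cat => //.
- exact: sb_size.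
- by rewrite compl_size //; lia.
- by apply: sorted_filter; [exact: ltn_trans | exact: iota_ltn_sorted].
- exact: sb_sorted.
- by rewrite compl_size // subnK; [exact: pb_perm | lia].
- move=> j hj; rewrite compl_nth //.
  have hjk : j < size (@sblock l1 L k f) by rewrite sb_size; lia.
  by case/andP: (sb_range hLk (mem_nth 0 hjk)) => h1 _; exact: (leq_ltn_trans hj h1).
Qed.


Lemma card_det k m (S : {set {ffun 'I_k -> 'I_m}}) (j : 'I_k) :
  (forall f g, f \in S -> g \in S -> (forall l, l != j -> f l = g l) -> f = g) -> #|S| <= m ^ k.-1.
Proof.
move=> hS.
pose phi (f : {ffun 'I_k -> 'I_m}) : {ffun 'I_k.-1 -> 'I_m} := [ffun l => f (lift j l)].
rewrite -(card_in_imset (f:=phi)); last first.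
  move=> f g hf hg /ffunP h; apply: hS => // l.
  case: (unliftP j l) => [l' ->|->]; last by rewrite eqxx.
  by move=> _; have := h l'; rewrite !ffunE.
by apply: leq_trans (max_card _) _; rewrite card_ffun !card_ord.
Qed.

Lemma card_union (T I : finType) (S : {set T}) (A : I -> {set T}) :
 (forall x, x \in S -> exists i, x \in A i) -> #|S| <= \sum_i #|A i|.
Proof.
move=> h.
have -> : \sum_i #|A i| = \sum_x \sum_i (x \in A i).
  rewrite exchange_big; apply: eq_bigr => i _; rewrite -sum1_card big_mkcond.
  by apply: eq_bigr => x _; case: (x \in A i).
rewrite -sum1_card big_mkcond; apply: leq_sum => x _.
case: ifP => // /h [i hi]; by rewrite (bigD1 i) //= hi.
Qed.

Section Upper.
Variables (k n : nat).

Definition toF (r : seq nat) : {ffun 'I_k -> 'I_n.+1} := [ffun i : 'I_k => inord (nth 0 r i)].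

Definition Cset : {set {ffun 'I_k -> 'I_n.+1}} :=
  [set f : {ffun 'I_k -> 'I_n.+1} | [exists i : 'I_k, exists j : 'I_k, (i != j) && (val (f j) == (val (f i)).+1)]].
Definition Eset : {set {ffun 'I_k -> 'I_n.+1}} :=
  [set f : {ffun 'I_k -> 'I_n.+1} | [exists j : 'I_k, val (f j) == n]].

Lemma toF_val r (i : 'I_k) : all (fun x => x <= n) r -> i < size r ->
  val (toF r i) = nth 0 r i.
Proof.
move=> /allP hr hi; rewrite ffunE /= inordK // ltnS; apply: hr; exact: mem_nth.
Qed.

Lemma toF_inj r r' : size r = k -> size r' = k ->
  all (fun x => x <= n) r -> all (fun x => x <= n) r' -> toF r = toF r' -> r = r'.
Proof.
move=> hs hs' ha ha' h; apply: (@eq_from_nth _ 0); first by rewrite hs hs'.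
move=> i; rewrite hs => hi.
have := congr1 (fun F : {ffun 'I_k -> 'I_n.+1} => val (F (Ordinal hi))) h.
by rewrite /= !toF_val ?hs ?hs'.
Qed.

Lemma card_Cset : #|Cset| <= k * k * n.+1 ^ k.-1.
Proof.
pose C (ij : 'I_k * 'I_k) : {set {ffun 'I_k -> 'I_n.+1}} :=
  [set f : {ffun 'I_k -> 'I_n.+1} | (ij.1 != ij.2) && (val (f ij.2) == (val (f ij.1)).+1)].
apply: leq_trans (card_union (A := C) _) _.
  move=> f; rewrite inE => /existsP[i /existsP[j hij]].
  by exists (i, j); rewrite inE.
rewrite (_ : k * k * _ = \sum_(ij : 'I_k * 'I_k) n.+1 ^ k.-1); last by rewrite sum_nat_const card_prod card_ord.
apply: leq_sum => [[i j]] _; apply: (card_det (j := j)) => f g.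
rewrite !inE /= => /andP[hij /eqP hf] /andP[_ /eqP hg] h.
apply/ffunP => l; case: (eqVneq l j) => [->|/h //].
by apply: val_inj; rewrite /= hf hg h // eq_sym.
Qed.

Lemma card_Eset : #|Eset| <= k * n.+1 ^ k.-1.
Proof.
pose E (j : 'I_k) : {set {ffun 'I_k -> 'I_n.+1}} := [set f : {ffun 'I_k -> 'I_n.+1} | val (f j) == n].
apply: leq_trans (card_union (A := E) _) _.
  move=> f; rewrite inE => /existsP[j hj].
  by exists j; rewrite inE.
rewrite (_ : k * _ = \sum_(j : 'I_k) n.+1 ^ k.-1); last by rewrite sum_nat_const card_ord.
apply: leq_sum => j _; apply: (card_det (j := j)) => f g.
rewrite !inE /= => /eqP hf /eqP hg h.
apply/ffunP => l; case: (eqVneq l j) => [->|/h //].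
by apply: val_inj; rewrite /= hf hg.
Qed.

End Upper.

Lemma B_upper lam n : sumn lam <= n ->
  count (fun p => is_syt (reshape (pad_shape lam n) p) &&
                  ~~ good_tableau n (reshape (pad_shape lam n) p))
        (permutations (iota 1 (sumn (pad_shape lam n))))
  <= (sumn lam * sumn lam + sumn lam) * n.+1 ^ (sumn lam).-1.
Proof.
move=> hkn.
set k := sumn lam in hkn *.
have -> : sumn (pad_shape lam n) = n by rewrite /pad_shape /= -/k; lia.
rewrite /pad_shape -/k /=.
set d := n - k.
set Q := (fun p => _).
set l := seq.filter Q (permutations (iota 1 n)).
have hl : forall p, p \in l -> [/\ perm_eq p (iota 1 n), size (drop d p) = k,
    all (fun x => x <= n) (drop d p), uniq (drop d p) & sorted ltn (take d p)].
  move=> p; rewrite mem_filter mem_permutations => /andP[/andP[hsyt _] hp].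
  split => //.
  - by rewrite size_drop (perm_size hp) size_iota /d; lia.
  - apply/allP => x /mem_drop; rewrite (perm_mem hp) mem_iota; lia.
  - by apply: drop_uniq; rewrite (perm_uniq hp) iota_uniq.
  - by case/and4P: hsyt => _ /andP[].
pose phi p := toF k n (drop d p).
rewrite -size_filter -/l -(size_map phi).
apply: leq_trans (_ : #|Cset k n :|: Eset k n| <= _); last first.
  apply: leq_trans (leq_card_setU _ _).1 _.
  rewrite mulnDl; apply: leq_add; [exact: card_Cset | exact: card_Eset].
rewrite cardE; apply: uniq_leq_size.
  rewrite map_inj_in_uniq ?filter_uniq ?permutations_uniq //.
  move=> p q hp hq /= hpq.
  have [pp sp ap _ tp] := hl p hp; have [pq sq aq _ tq] := hl q hq.
  have hd : drop d p = drop d q by apply: (toF_inj sp sq ap aq).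
  have ht : take d p = take d q.
    apply: (irr_sorted_eq ltn_trans ltnn tp tq); apply: perm_mem.
    rewrite -(perm_cat2r (drop d p)) {2}hd !cat_take_drop.
    by apply: perm_trans pp _; rewrite perm_sym.
  by rewrite -(cat_take_drop d p) -(cat_take_drop d q) hd ht.
move=> f /mapP[p hp ->]; rewrite mem_enum.
have [pp sp ap up tp] := hl p hp.
move: hp; rewrite mem_filter => /andP[/andP[_ hbad] _].
move: hbad; rewrite /good_tableau /entries /= reshapeKr; last by rewrite sp.
set r := drop d p in sp ap up tp *.
have hidx : forall x, x \in r -> index x r < k by move=> x xr; rewrite -sp index_mem.
rewrite negb_and negbK => /orP[/allPn[x xr /allPn[y yr hxy]]|/andP[_ nr]].
  have [a [b [ar br hab]]] : exists a b, [/\ a \in r, b \in r & b = a.+1].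
    move: hxy; rewrite !negb_or => /andP[/andP[hne h1] h2].
    case: (ltngtP x y) hne => [hlt|hgt|] // _.
    - by exists x, y; split => //; lia.
    - by exists y, x; split => //; lia.
  apply/setUP; left; rewrite inE.
  apply/existsP; exists (Ordinal (hidx a ar)); apply/existsP; exists (Ordinal (hidx b br)).
  rewrite !toF_val ?sp //= -/r ?hidx // !nth_index //.
  apply/andP; split; last by rewrite hab.
  apply/eqP => /(congr1 val) /= /(congr1 (nth 0 r)); rewrite !nth_index // hab.
  lia.
apply/setUP; right; rewrite inE.
apply/existsP; exists (Ordinal (hidx n nr)).
by rewrite toF_val ?sp //= -/r ?hidx // nth_index.
Qed.


Lemma exp_mono a b e : a <= b -> a ^ e <= b ^ e.
Proof. by move=> h; case: e => [|e] //; rewrite leq_exp2r. Qed.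

Lemma count_split (T : Type) (a b : pred T) (s : seq T) :
  count (fun p => a p && true) s = count (fun p => a p && b p) s + count (fun p => a p && ~~ b p) s.
Proof. by elim: s => //= x s ->; case: (a x); case: (b x) => /=; lia. Qed.

Lemma key_nat lam : is_partition lam -> lam != [::] ->
  exists n0 K, forall n, n0 <= n ->
    [/\ 0 < N_syt lam n, G_syt lam n <= N_syt lam n &
        (N_syt lam n - G_syt lam n) * n <= K * N_syt lam n].
Proof.
move=> hpart hne.
have hl1k : head 0 lam <= sumn lam by case: (lam) => //= x l; apply: leq_addr.
have hk : 0 < sumn lam.
  case/andP: hpart => _; case: (lam) hne => //= x l _ /andP[hx _]; lia.
set k := sumn lam in hl1k hk *; set l1 := head 0 lam in hl1k *.
exists (2 * (l1 + k)).+1, ((k * k + k) * (4 * k) ^ k) => n hn.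
have hNG : N_syt lam n = G_syt lam n + count (fun p => is_syt (reshape (pad_shape lam n) p) &&
                  ~~ good_tableau n (reshape (pad_shape lam n) p))
        (permutations (iota 1 (sumn (pad_shape lam n)))).
  by rewrite /N_syt /G_syt /num_syt_such (count_split _ (fun p => good_tableau n (reshape (pad_shape lam n) p))).
have hkn : k <= n by lia.
have hkl : k + l1 <= n by lia.
have hB := @B_upper lam n hkn; rewrite -/k in hB.
have hN := @N_lower lam n hpart hne hkl; rewrite -/k -/l1 in hN.
set L := (n - l1) %/ k in hN.
have hL : 2 * n <= 4 * k * L.
  have := ltn_ceil (n - l1) hk; rewrite -/L mulSn; lia.
have hL1 : 0 < L by rewrite divn_gt0 //; lia.
split.
- apply: leq_trans _ hN; rewrite expn_gt0 hL1 //.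
- by rewrite hNG leq_addr.
rewrite {1}hNG addKn.
set B := count _ _ in hB *.
have hk1 : k = k.-1.+1 by lia.
apply: leq_trans (_ : (k * k + k) * (2 * n) ^ k <= _).
  apply: leq_trans (leq_mul hB (leqnn n)) _.
  rewrite -mulnA leq_mul2l; apply/orP; right.
  rewrite {2}hk1 expnSr; apply: leq_mul; last by lia.
  by apply: exp_mono; lia.
rewrite -mulnA leq_mul2l; apply/orP; right.
apply: leq_trans (exp_mono k hL) _.
by rewrite expnMn leq_mul2l hN orbT.
Qed.

Import Order.TTheory GRing.Theory Num.Theory numFieldNormedType.Exports.
Local Open Scope classical_set_scope.
Local Open Scope ring_scope.

Theorem theorem3p2 (R : realType) (lam : seq nat) :
  is_partition lam -> lam != [::] ->
  (fun n : nat => ((G_syt lam n)%:R / (N_syt lam n)%:R : R)) @ \oo --> (1 : R).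
Proof.
move=> hpart hne.
have [n0 [K hK]] := key_nat hpart hne.
apply/cvgrPdist_le => e e0.
have h1 := nbhs_infty_ge n0.+1.
have h2 := nbhs_infty_ger (K%:R / e : R).
apply: filterS2 h1 h2 => n hn1 hn2.
have [hN hGN hB] := hK n (ltnW hn1).
have hn : (0 < n)%N by apply: leq_ltn_trans hn1.
have hNr : (0 : R) < (N_syt lam n)%:R by rewrite ltr0n.
have hnr : (0 : R) < n%:R by rewrite ltr0n.
have -> : 1 - (G_syt lam n)%:R / (N_syt lam n)%:R = (N_syt lam n - G_syt lam n)%:R / (N_syt lam n)%:R :> R.
  by rewrite natrB // mulrBl divff ?gt_eqF.
rewrite ger0_norm ?divr_ge0 ?ler0n // ler_pdivrMr //.
have hB' : ((N_syt lam n - G_syt lam n) * n)%:R <= (K * N_syt lam n)%:R :> R by rewrite ler_nat.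
rewrite !natrM in hB'.
have hKe : (K%:R : R) <= e * n%:R by move: hn2; rewrite ler_pdivrMr // mulrC.
rewrite -(ler_pM2r hnr); apply: le_trans hB' _.
by rewrite mulrAC; apply: ler_wpM2r; rewrite ?ler0n.
Qed.
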